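(* Let $N_1,N_3,J,L\in\mathbb{N}$ and let $\hat{\mathcal{X}}\in\mathbb{R}^{N_1\times J\times N_3\times L}$ be a real fourth-order tensor with slices $\hat{\mathcal{X}}_{jl}\in\mathbb{R}^{N_1\times N_3}$ given by $(\hat{\mathcal{X}}_{jl})_{ik}=\hat{\mathcal{X}}_{ijkl}$. Consider all factorizations $\hat{\mathcal{X}}_{jl}=\mathbf{U}(\mathbf{R}_j\mathbf{T}_l)\mathbf{V}^\top$ for all $j=1,\dots,J$, $l=1,\dots,L$, where $D\in\mathbb{N}$ is arbitrary, $\mathbf{U}\in\mathbb{R}^{N_1\times D}$, $\mathbf{V}\in\mathbb{R}^{N_3\times D}$, and $\mathbf{R}_j,\mathbf{T}_l\in\mathbb{R}^{D\times D}$ are real diagonal matrices. Then $$\|\hat{\mathcal{X}}\|_*=\min_{\substack{D,\ \mathbf{U},\mathbf{V},(\mathbf{R}_j),(\mathbf{T}_l):\\ \hat{\mathcal{X}}_{jl}=\mathbf{U}(\mathbf{R}_j\mathbf{T}_l)\mathbf{V}^\top\ \forall j,l}}\ \frac{1}{4\sqrt{JL}}\sum_{l=1}^{L}\sum_{j=1}^{J}\Big(\|\mathbf{U}\mathbf{R}_j\mathbf{T}_l\|_F^2+\|\mathbf{V}\|_F^2+\|\mathbf{V}(\mathbf{R}_j\mathbf{T}_l)^\top\|_F^2+\|\mathbf{U}\|_F^2\Big).$$ Moreover, every factorization attaining this minimum satisfies, for every $d\in\{1,\dots,D\}$, $$\|\mathbf{u}_{:d}\|_2\|\mathbf{r}_{:d}\|_2\|\mathbf{t}_{:d}\|_2=\sqrt{JL}\,\|\mathbf{v}_{:d}\|_2\quad\text{and}\quad\|\mathbf{v}_{:d}\|_2\|\mathbf{r}_{:d}\|_2\|\mathbf{t}_{:d}\|_2=\sqrt{JL}\,\|\mathbf{u}_{:d}\|_2,$$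 where $\mathbf{u}_{:d},\mathbf{v}_{:d}$ are the $d$-th columns of $\mathbf{U},\mathbf{V}$, $\mathbf{r}_{:d}\in\mathbb{R}^J$ is the $d$-th column of $\widetilde{\mathbf{R}}\in\mathbb{R}^{J\times D}$ with $\widetilde{\mathbf{R}}(j,d)=\mathbf{R}_j(d,d)$, and $\mathbf{t}_{:d}\in\mathbb{R}^L$ is the $d$-th column of $\widetilde{\mathbf{T}}\in\mathbb{R}^{L\times D}$ with $\widetilde{\mathbf{T}}(l,d)=\mathbf{T}_l(d,d)$.
   Context: $\|\cdot\|_F$ is the Frobenius norm and $\|\cdot\|_2$ the Euclidean norm. The tensor nuclear 2-norm of a real tensor $\mathcal{A}\in\mathbb{R}^{n_1}\otimes\mathbb{R}^{n_2}\otimes\mathbb{R}^{n_3}\otimes\mathbb{R}^{n_4}$ is $\|\mathcal{A}\|_*=\min\big\{\sum_{i=1}^r\prod_{k=1}^4\|\mathbf{a}_{k,i}\|_2:\ \mathcal{A}=\sum_{i=1}^r\mathbf{a}_{1,i}\otimes\mathbf{a}_{2,i}\otimes\mathbf{a}_{3,i}\otimes\mathbf{a}_{4,i},\ r\in\mathbb{N},\ \mathbf{a}_{k,i}\in\mathbb{R}^{n_k}\big\}$, where $\otimes$ is the outer product. The factorization condition is equivalent to $\hat{\mathcal{X}}=\sum_{d=1}^D\mathbf{u}_{:d}\otimes\mathbf{r}_{:d}\otimes\mathbf{v}_{:d}\otimes\mathbf{t}_{:d}$. *)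

(* Defs.v *)
From HB Require Import structures.
From mathcomp Require Import all_boot all_order all_algebra.
From mathcomp Require Import boolp classical_sets reals.
Set Implicit Arguments. Unset Strict Implicit. Unset Printing Implicit Defensive.
Import Order.TTheory GRing.Theory Num.Theory.
Local Open Scope ring_scope.
Local Open Scope classical_set_scope.

Definition tensor4 (R : realType) (N1 J N3 L : nat) :=
  'I_N1 -> 'I_J -> 'I_N3 -> 'I_L -> R.

(* Frobenius norm of a matrix (for column vectors: the Euclidean norm). *)
Definition frob {R : realType} {m n : nat} (A : 'M[R]_(m, n)) : R :=
  Num.sqrt (\sum_(i < m) \sum_(j < n) A i j ^+ 2).

(* Set of costs sum_s prod_k ||a_{k,s}||_2 of all rank-one decompositions
   X = sum_{s<r} a_{1,s} (x) a_{2,s} (x) a_{3,s} (x) a_{4,s};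
   the vectors a_{k,s} are the s-th columns of A_k. *)
Definition nuc_costs {R : realType} {N1 J N3 L : nat}
  (X : tensor4 R N1 J N3 L) : set R :=
  [set c | exists (r : nat) (A1 : 'M[R]_(N1, r)) (A2 : 'M[R]_(J, r))
             (A3 : 'M[R]_(N3, r)) (A4 : 'M[R]_(L, r)),
     (forall i j k l,
        X i j k l = \sum_(s < r) A1 i s * A2 j s * A3 k s * A4 l s) /\
     c = \sum_(s < r) frob (col s A1) * frob (col s A2)
                      * frob (col s A3) * frob (col s A4)].

Definition nuc_norm {R : realType} {N1 J N3 L : nat}
  (X : tensor4 R N1 J N3 L) : R := inf (nuc_costs X).

Definition slice {R : realType} {N1 J N3 L : nat}
  (X : tensor4 R N1 J N3 L) (j : 'I_J) (l : 'I_L) : 'M[R]_(N1, N3) :=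
  \matrix_(i, k) X i j k l.

Definition diagR {R : realType} {J D : nat} (Rt : 'M[R]_(J, D)) (j : 'I_J)
  : 'M[R]_D := diag_mx (row j Rt).

Definition is_fact {R : realType} {N1 J N3 L D : nat}
  (X : tensor4 R N1 J N3 L) (U : 'M[R]_(N1, D)) (V : 'M[R]_(N3, D))
  (Rt : 'M[R]_(J, D)) (Tt : 'M[R]_(L, D)) : Prop :=
  forall j l, slice X j l = U *m (diagR Rt j *m diagR Tt l) *m V^T.

Definition fact_obj {R : realType} {N1 N3 J L D : nat}
  (U : 'M[R]_(N1, D)) (V : 'M[R]_(N3, D))
  (Rt : 'M[R]_(J, D)) (Tt : 'M[R]_(L, D)) : R :=
  (4 * Num.sqrt ((J * L)%:R))^-1 *
  \sum_(l < L) \sum_(j < J)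
    (frob (U *m (diagR Rt j *m diagR Tt l)) ^+ 2 + frob V ^+ 2
     + frob (V *m (diagR Rt j *m diagR Tt l)^T) ^+ 2 + frob U ^+ 2).

(* Main.v *)
Require Import Defs.
From HB Require Import structures.
From mathcomp Require Import all_boot all_order all_algebra.
From mathcomp Require Import boolp classical_sets reals.
From mathcomp Require Import interval_inference topology normedtype derive matrix_normedtype.
From mathcomp Require Import ring lra.
Import Order.TTheory GRing.Theory Num.Theory.
Import numFieldNormedType.Exports.
Set Implicit Arguments. Unset Strict Implicit. Unset Printing Implicit Defensive.
Local Open Scope ring_scope.

Section Alg.
Variable R : realType.

Definition sqc {n r} (A : 'M[R]_(n, r)) (s : 'I_r) : R := \sum_i A i s ^+ 2.

Lemma sqc_ge0 n r (A : 'M[R]_(n,r)) s : 0 <= sqc A s.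
Proof. by apply: sumr_ge0 => i _; rewrite sqr_ge0. Qed.

Lemma frob_col n r (A : 'M[R]_(n,r)) s : frob (col s A) = Num.sqrt (sqc A s).
Proof.
by rewrite /frob /sqc; congr Num.sqrt; apply: eq_bigr => i _; rewrite big_ord1 mxE.
Qed.

Lemma frob_col_sqr n r (A : 'M[R]_(n,r)) s : frob (col s A) ^+ 2 = sqc A s.
Proof. by rewrite frob_col sqr_sqrtr // sqc_ge0. Qed.

Lemma frob_ge0 m n (A : 'M[R]_(m,n)) : 0 <= frob A. Proof. exact: sqrtr_ge0. Qed.

Lemma frob_sqr m n (A : 'M[R]_(m,n)) : frob A ^+ 2 = \sum_i \sum_j A i j ^+ 2.
Proof.
rewrite /frob sqr_sqrtr //; apply: sumr_ge0 => i _; apply: sumr_ge0 => j _.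
exact: sqr_ge0.
Qed.

Lemma sqc_eq0 n r (A : 'M[R]_(n,r)) s : sqc A s = 0 -> forall i, A i s = 0.
Proof.
move=> H i; have := @psumr_eq0P _ _ xpredT (fun i => A i s ^+ 2) (fun i _ => sqr_ge0 (A i s)) H i isT.
by move/eqP; rewrite sqrf_eq0 => /eqP.
Qed.

Lemma frob_col_eq0 n r (A : 'M[R]_(n,r)) s : frob (col s A) = 0 -> forall i, A i s = 0.
Proof.
move=> H; apply: sqc_eq0; by rewrite -frob_col_sqr H expr0n.
Qed.

Lemma fact_entry N1 N3 J L D (U : 'M[R]_(N1,D)) (V : 'M[R]_(N3,D))
  (Rt : 'M[R]_(J,D)) (Tt : 'M[R]_(L,D)) j l i k :
  (U *m (diagR Rt j *m diagR Tt l) *m V^T) i k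
  = \sum_d U i d * Rt j d * Tt l d * V k d.
Proof.
rewrite /diagR mulmxA mul_mx_diag mul_mx_diag !mxE; apply: eq_bigr => d _.
by rewrite !mxE.
Qed.

Definition decomp N1 J N3 L (X : tensor4 R N1 J N3 L) r (A1 : 'M[R]_(N1,r))
  (A2 : 'M[R]_(J,r)) (A3 : 'M[R]_(N3,r)) (A4 : 'M[R]_(L,r)) :=
  forall i j k l, X i j k l = \sum_(s < r) A1 i s * A2 j s * A3 k s * A4 l s.

Definition costD N1 J N3 L r (A1 : 'M[R]_(N1,r))
  (A2 : 'M[R]_(J,r)) (A3 : 'M[R]_(N3,r)) (A4 : 'M[R]_(L,r)) :=
  \sum_(s < r) frob (col s A1) * frob (col s A2) * frob (col s A3) * frob (col s A4).

Lemma costD_ge0 N1 J N3 L r (A1 : 'M[R]_(N1,r))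
  (A2 : 'M[R]_(J,r)) (A3 : 'M[R]_(N3,r)) (A4 : 'M[R]_(L,r)) :
  0 <= costD A1 A2 A3 A4.
Proof.
apply: sumr_ge0 => s _; do !apply: mulr_ge0; exact: frob_ge0.
Qed.

Lemma nuc_costsP N1 J N3 L (X : tensor4 R N1 J N3 L) c :
  nuc_costs X c <-> exists r A1 A2 A3 A4,
    @decomp N1 J N3 L X r A1 A2 A3 A4 /\ c = costD A1 A2 A3 A4.
Proof. by []. Qed.

Lemma fact_decomp N1 J N3 L (X : tensor4 R N1 J N3 L) D (U : 'M[R]_(N1,D))
  (V : 'M[R]_(N3,D)) (Rt : 'M[R]_(J,D)) (Tt : 'M[R]_(L,D)) :
  is_fact X U V Rt Tt -> decomp X U Rt V Tt.
Proof.
move=> H i j k l; have := H j l; move/matrixP/(_ i k).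
rewrite /slice mxE fact_entry => ->; apply: eq_bigr => d _; by rewrite mulrAC.
Qed.

Lemma sum4 N D J L (F : 'I_L -> 'I_J -> 'I_N -> 'I_D -> R) :
  \sum_l \sum_j \sum_i \sum_d F l j i d = \sum_d \sum_i \sum_j \sum_l F l j i d.
Proof.
under eq_bigr do under eq_bigr do rewrite exchange_big.
under eq_bigr do rewrite exchange_big.
rewrite exchange_big; apply: eq_bigr => d _.
under eq_bigr do rewrite exchange_big.
rewrite exchange_big; apply: eq_bigr => i _.
by rewrite exchange_big.
Qed.

End Alg.

Section Obj.
Variable R : realType.

Lemma entryU N1 J L D (U : 'M[R]_(N1,D)) (Rt : 'M[R]_(J,D)) (Tt : 'M[R]_(L,D)) j l i d :
  (U *m (diagR Rt j *m diagR Tt l)) i d = U i d * Rt j d * Tt l d.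
Proof. by rewrite /diagR mulmxA mul_mx_diag mul_mx_diag !mxE. Qed.

Lemma entryV N3 J L D (V : 'M[R]_(N3,D)) (Rt : 'M[R]_(J,D)) (Tt : 'M[R]_(L,D)) j l k d :
  (V *m (diagR Rt j *m diagR Tt l)^T) k d = V k d * Rt j d * Tt l d.
Proof.
rewrite /diagR trmx_mul !tr_diag_mx mulmxA mul_mx_diag mul_mx_diag !mxE.
by rewrite mulrAC.
Qed.

Lemma sum_const2 J L (c : R) : \sum_(l < L) \sum_(j < J) c = (J * L)%:R * c.
Proof.
rewrite !sumr_const !card_ord -mulrnA mulr_natl mulnC //.
Qed.

Lemma triple_sum N J L D (U : 'M[R]_(N,D)) (Rt : 'M[R]_(J,D)) (Tt : 'M[R]_(L,D)) :
  \sum_(l < L) \sum_(j < J) \sum_i \sum_d (U i d * Rt j d * Tt l d) ^+ 2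
  = \sum_d sqc U d * sqc Rt d * sqc Tt d.
Proof.
rewrite sum4; apply: eq_bigr => d _.
rewrite /sqc big_distrl big_distrl /=; apply: eq_bigr => i _.
rewrite -mulrA big_distrl /= big_distrr /=; apply: eq_bigr => j _.
rewrite big_distrr big_distrr /=; apply: eq_bigr => l _.
by rewrite !exprMn mulrA.
Qed.

Lemma frob_sqc N D (V : 'M[R]_(N,D)) : frob V ^+ 2 = \sum_d sqc V d.
Proof. by rewrite frob_sqr exchange_big. Qed.

Lemma obj_expand N1 N3 J L D (U : 'M[R]_(N1,D)) (V : 'M[R]_(N3,D))
  (Rt : 'M[R]_(J,D)) (Tt : 'M[R]_(L,D)) :
  fact_obj U V Rt Tt = (4 * Num.sqrt ((J * L)%:R))^-1 *
   \sum_d (sqc U d * sqc Rt d * sqc Tt d + (J * L)%:R * sqc V d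
           + sqc V d * sqc Rt d * sqc Tt d + (J * L)%:R * sqc U d).
Proof.
rewrite /fact_obj; congr (_ * _).
under eq_bigr do rewrite !big_split /=.
rewrite !big_split /=.
congr (_ + _ + _ + _).
- rewrite -triple_sum; apply: eq_bigr => l _; apply: eq_bigr => j _.
  rewrite frob_sqr; apply: eq_bigr => i _; apply: eq_bigr => d _.
  by rewrite entryU.
- by rewrite sum_const2 frob_sqc mulr_sumr.
- rewrite -triple_sum; apply: eq_bigr => l _; apply: eq_bigr => j _.
  rewrite frob_sqr; apply: eq_bigr => i _; apply: eq_bigr => d _.
  by rewrite entryV.
- by rewrite sum_const2 frob_sqc mulr_sumr.
Qed.

End Obj.

Section Ineq.
Variable R : realType.

Lemma obj_decomp N1 N3 J L D (U : 'M[R]_(N1,D)) (V : 'M[R]_(N3,D))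
  (Rt : 'M[R]_(J,D)) (Tt : 'M[R]_(L,D)) :
  fact_obj U V Rt Tt = (4 * Num.sqrt ((J * L)%:R))^-1 *
   (\sum_d ((frob (col d U) * frob (col d Rt) * frob (col d Tt) - Num.sqrt ((J * L)%:R) * frob (col d V)) ^+ 2
        + (frob (col d V) * frob (col d Rt) * frob (col d Tt) - Num.sqrt ((J * L)%:R) * frob (col d U)) ^+ 2)
    + 4 * Num.sqrt ((J * L)%:R) * costD U Rt V Tt).
Proof.
set S := Num.sqrt _; rewrite obj_expand; congr (_ * _).
have HS : (J * L)%:R = S ^+ 2 by rewrite sqr_sqrtr // ler0n.
rewrite /costD mulr_sumr -big_split /=; apply: eq_bigr => d _.
rewrite -!frob_col_sqr HS; ring.
Qed.

Lemma costD_JL0 N1 N3 J L D (U : 'M[R]_(N1,D)) (V : 'M[R]_(N3,D))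
  (Rt : 'M[R]_(J,D)) (Tt : 'M[R]_(L,D)) :
  (J * L = 0)%N -> costD U Rt V Tt = 0.
Proof.
move=> /eqP; rewrite muln_eq0 => /orP [] /eqP JL0; apply: big1 => d _.
- by subst J; rewrite (frob_col Rt) /sqc big_ord0 sqrtr0 mulr0 !mul0r.
- by subst L; rewrite (frob_col Tt) /sqc big_ord0 sqrtr0 mulr0.
Qed.


Lemma nuc_lb N1 J N3 L (X : tensor4 R N1 J N3 L) : has_lbound (nuc_costs X).
Proof. by exists 0 => c [r [A1 [A2 [A3 [A4 [_ ->]]]]]]; exact: costD_ge0. Qed.

Lemma nuc_le N1 J N3 L (X : tensor4 R N1 J N3 L) c : nuc_costs X c -> nuc_norm X <= c.
Proof. by move=> Hc; apply: (ge_inf (nuc_lb X)). Qed.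

Lemma S_pos J L : (J * L != 0)%N -> 0 < Num.sqrt ((J * L)%:R) :> R.
Proof. by move=> H; rewrite sqrtr_gt0 ltr0n lt0n. Qed.

Lemma S_0 J L : (J * L = 0)%N -> Num.sqrt ((J * L)%:R) = 0 :> R.
Proof. by move=> ->; rewrite sqrtr0. Qed.

Lemma costD_le_obj N1 N3 J L D (U : 'M[R]_(N1,D)) (V : 'M[R]_(N3,D))
  (Rt : 'M[R]_(J,D)) (Tt : 'M[R]_(L,D)) :
  costD U Rt V Tt <= fact_obj U V Rt Tt.
Proof.
have [JL0|JL0] := eqVneq (J * L)%N 0%N.
  by rewrite costD_JL0 // obj_decomp S_0 // mulr0 invr0 !mul0r.
rewrite obj_decomp /= mulrDr mulrA mulVf ?mul1r; last first.
  by rewrite mulf_neq0 // gt_eqF // S_pos.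
rewrite lerDr; apply: mulr_ge0.
  by rewrite invr_ge0 mulr_ge0 // ltW // S_pos.
by apply: sumr_ge0 => d _; rewrite addr_ge0 // sqr_ge0.
Qed.

Lemma part2 N1 N3 J L (X : tensor4 R N1 J N3 L) D (U : 'M[R]_(N1,D)) (V : 'M[R]_(N3,D))
  (Rt : 'M[R]_(J,D)) (Tt : 'M[R]_(L,D)) :
  is_fact X U V Rt Tt -> nuc_norm X <= fact_obj U V Rt Tt.
Proof.
move=> H; apply: le_trans (costD_le_obj U V Rt Tt); apply: nuc_le.
by exists D, U, Rt, V, Tt; split => //; exact: fact_decomp.
Qed.

Lemma part3 N1 N3 J L (X : tensor4 R N1 J N3 L) D (U : 'M[R]_(N1,D)) (V : 'M[R]_(N3,D))
  (Rt : 'M[R]_(J,D)) (Tt : 'M[R]_(L,D)) :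
  is_fact X U V Rt Tt -> fact_obj U V Rt Tt = nuc_norm X ->
      forall d : 'I_D,
        frob (col d U) * frob (col d Rt) * frob (col d Tt)
          = Num.sqrt ((J * L)%:R) * frob (col d V) /\
        frob (col d V) * frob (col d Rt) * frob (col d Tt)
          = Num.sqrt ((J * L)%:R) * frob (col d U).
Proof.
move=> H Hobj d.
have Hc : fact_obj U V Rt Tt <= costD U Rt V Tt.
  rewrite Hobj; apply: nuc_le.
  by exists D, U, Rt, V, Tt; split => //; exact: fact_decomp.
have [JL0|JL0] := eqVneq (J * L)%N 0%N.
  rewrite S_0 // !mul0r.
  move: JL0 => /eqP; rewrite muln_eq0 => /orP [] /eqP JL0.
  - by subst J; rewrite (frob_col Rt) /sqc big_ord0 sqrtr0 !mulr0 !mul0r.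
  - by subst L; rewrite (frob_col Tt) /sqc big_ord0 sqrtr0 !mulr0.
move: Hc; rewrite obj_decomp /= mulrDr mulrA mulVf ?mul1r; last first.
  by rewrite mulf_neq0 // gt_eqF // S_pos.
rewrite gerDr => Hle.
set S := Num.sqrt _ in Hle *.
pose F (d : 'I_D) := (frob (col d U) * frob (col d Rt) * frob (col d Tt) - S * frob (col d V)) ^+ 2
  + (frob (col d V) * frob (col d Rt) * frob (col d Tt) - S * frob (col d U)) ^+ 2.
have {}Hle : (4 * S)^-1 * \sum_d F d <= 0 := Hle.
have F0 : forall d, 0 <= F d by move=> d'; rewrite /F addr_ge0 // sqr_ge0.
have Hsum : \sum_d F d = 0.
  apply/eqP; rewrite eq_le (sumr_ge0 _ (fun i _ => F0 i)) andbT.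
  have Sp : 0 < (4 * S)^-1 by rewrite invr_gt0 mulr_gt0 // S_pos.
  by move: Hle; rewrite pmulr_rle0.
have := @psumr_eq0P _ _ xpredT F (fun i _ => F0 i) Hsum d isT.
rewrite /F => /eqP; rewrite paddr_eq0 ?sqr_ge0 // !sqrf_eq0 !subr_eq0.
by move=> /andP [/eqP -> /eqP ->].
Qed.

End Ineq.

Section Constr.
Variable R : realType.

Definition scalem n r (A : 'M[R]_(n,r)) (c : 'I_r -> R) : 'M[R]_(n,r) :=
  \matrix_(i, s) (A i s * c s).

Lemma scale_sqc n r (A : 'M[R]_(n,r)) c s : sqc (scalem A c) s = sqc A s * c s ^+ 2.
Proof.
rewrite /sqc mulr_suml; apply: eq_bigr => i _; by rewrite mxE exprMn.
Qed.

Lemma scale_frob n r (A : 'M[R]_(n,r)) c s :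
  frob (col s (scalem A c)) = frob (col s A) * `|c s|.
Proof. by rewrite !frob_col scale_sqc sqrtrM ?sqc_ge0 // sqrtr_sqr. Qed.

Definition balanced N1 J N3 L r (A1 : 'M[R]_(N1,r))
  (A2 : 'M[R]_(J,r)) (A3 : 'M[R]_(N3,r)) (A4 : 'M[R]_(L,r)) :=
  forall s, sqc A2 s = sqc A1 s /\ sqc A3 s = sqc A1 s /\ sqc A4 s = sqc A1 s.

Lemma costD_bal N1 J N3 L r (A1 : 'M[R]_(N1,r))
  (A2 : 'M[R]_(J,r)) (A3 : 'M[R]_(N3,r)) (A4 : 'M[R]_(L,r)) :
  balanced A1 A2 A3 A4 -> costD A1 A2 A3 A4 = \sum_s sqc A1 s ^+ 2.
Proof.
move=> Hb; apply: eq_bigr => s _; have [h2 [h3 h4]] := Hb s.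
rewrite !frob_col h2 h3 h4 -expr2 -exprSr -exprSr.
by rewrite -[in RHS](sqr_sqrtr (sqc_ge0 A1 s)) -exprM.
Qed.

Lemma construct N1 J N3 L (X : tensor4 R N1 J N3 L) r (A1 : 'M[R]_(N1,r))
  (A2 : 'M[R]_(J,r)) (A3 : 'M[R]_(N3,r)) (A4 : 'M[R]_(L,r)) :
  (J * L != 0)%N -> decomp X A1 A2 A3 A4 -> balanced A1 A2 A3 A4 ->
  exists (U : 'M[R]_(N1, r)) (V : 'M[R]_(N3, r))
          (Rt : 'M[R]_(J, r)) (Tt : 'M[R]_(L, r)),
      is_fact X U V Rt Tt /\ fact_obj U V Rt Tt = costD A1 A2 A3 A4.
Proof.
move=> JL0 Hd Hb.
set S : R := Num.sqrt ((J * L)%:R).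
have Sp : 0 < S by exact: S_pos.
set sg := Num.sqrt S.
have sgp : 0 < sg by rewrite sqrtr_gt0.
have sg2 : sg ^+ 2 = S by rewrite sqr_sqrtr // ltW.
pose rho s := frob (col s A1).
have rho_ge0 s : 0 <= rho s by exact: frob_ge0.
have fr s : frob (col s A2) = rho s /\ frob (col s A3) = rho s /\ frob (col s A4) = rho s.
  by have [h2 [h3 h4]] := Hb s; rewrite /rho !frob_col h2 h3 h4.
pose al s := rho s / sg.
pose be s := sg / rho s.
exists (scalem A1 al), (scalem A3 al), (scalem A2 be), (scalem A4 be); split.
  move=> j l; apply/matrixP => i k; rewrite fact_entry /slice mxE Hd.
  apply: eq_bigr => s _; rewrite !mxE.
  have [r0|r0] := eqVneq (rho s) 0.
    by rewrite (frob_col_eq0 r0) !mul0r.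
  have ab : al s * be s = 1.
    by rewrite /al /be mulrA divfK ?gt_eqF // mulfV.
  have -> : A1 i s * al s * (A2 j s * be s) * (A4 l s * be s) * (A3 k s * al s)
      = A1 i s * A2 j s * A3 k s * A4 l s * (al s * be s) ^+ 2 by ring.
  by rewrite ab expr1n mulr1.
rewrite obj_decomp.
have Hcol s : frob (col s (scalem A1 al)) * frob (col s (scalem A2 be))
     * frob (col s (scalem A4 be)) - S * frob (col s (scalem A3 al)) = 0 /\
   frob (col s (scalem A3 al)) * frob (col s (scalem A2 be))
     * frob (col s (scalem A4 be)) - S * frob (col s (scalem A1 al)) = 0 /\
   frob (col s (scalem A1 al)) * frob (col s (scalem A2 be))
     * frob (col s (scalem A3 al)) * frob (col s (scalem A4 be)) = rho s ^+ 4.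
  have [h2 [h3 h4]] := fr s.
  rewrite !scale_frob h2 h3 h4 -/(rho s).
  have [r0|r0] := eqVneq (rho s) 0.
    by rewrite r0 !mul0r mulr0 subr0 expr0n; do !split.
  have alE : `|al s| = rho s / sg by rewrite ger0_norm // divr_ge0 // ltW.
  have beE : `|be s| = sg / rho s by rewrite ger0_norm // divr_ge0 // ltW.
  rewrite alE beE -sg2; split; [|split]; field; by rewrite r0 gt_eqF.
rewrite big1; last by move=> s _; have [-> [-> _]] := Hcol s; rewrite expr0n addr0.
rewrite add0r mulrA mulVf ?mul1r; last by rewrite mulf_neq0 // gt_eqF.
rewrite (costD_bal Hb); apply: eq_bigr => s _; have [_ [_ ->]] := Hcol s.
by rewrite /rho frob_col -[in RHS](sqr_sqrtr (sqc_ge0 A1 s)) -exprM.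
Qed.

End Constr.

Section Bal.
Variable R : realType.

Lemma balance N1 J N3 L (X : tensor4 R N1 J N3 L) r (A1 : 'M[R]_(N1,r))
  (A2 : 'M[R]_(J,r)) (A3 : 'M[R]_(N3,r)) (A4 : 'M[R]_(L,r)) :
  decomp X A1 A2 A3 A4 ->
  exists (B1 : 'M[R]_(N1,r)) (B2 : 'M[R]_(J,r)) (B3 : 'M[R]_(N3,r)) (B4 : 'M[R]_(L,r)),
    [/\ decomp X B1 B2 B3 B4, balanced B1 B2 B3 B4 & costD B1 B2 B3 B4 = costD A1 A2 A3 A4].
Proof.
move=> Hd.
pose f1 s := frob (col s A1). pose f2 s := frob (col s A2).
pose f3 s := frob (col s A3). pose f4 s := frob (col s A4).
pose w s := f1 s * f2 s * f3 s * f4 s.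
have w_ge0 s : 0 <= w s by rewrite /w !mulr_ge0 // frob_ge0.
pose rho s := Num.sqrt (Num.sqrt (w s)).
have rho_ge0 s : 0 <= rho s by exact: sqrtr_ge0.
have rho4 s : rho s ^+ 4 = w s.
  by rewrite (_ : 4 = 2 * 2)%N // exprM !sqr_sqrtr // sqrtr_ge0.
have w0 s : w s = 0 -> rho s = 0 by move=> H; rewrite /rho H !sqrtr0.
have rho0 s : rho s = 0 -> w s = 0 by move=> H; rewrite -rho4 H expr0n.
pose c1 s := rho s / f1 s. pose c2 s := rho s / f2 s.
pose c3 s := rho s / f3 s. pose c4 s := rho s / f4 s.
have key n (A : 'M[R]_(n, r)) (f : 'I_r -> R) :
    (forall s, f s = frob (col s A)) -> (forall s, f s = 0 -> w s = 0) ->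
    forall s, sqc (scalem A (fun s => rho s / f s)) s = rho s ^+ 2 /\
              frob (col s (scalem A (fun s => rho s / f s))) = rho s.
  move=> fE fw s; rewrite scale_sqc scale_frob -fE.
  have [f0|f0] := eqVneq (f s) 0.
    by rewrite (w0 s (fw s f0)) f0 !mul0r expr0n /= mulr0.
  have fp : 0 < f s by rewrite lt_def f0 fE frob_ge0.
  rewrite ger0_norm ?divr_ge0 // ?ltW //.
  split; last by rewrite mulrC divfK.
  by rewrite -(frob_col_sqr A) -fE expr_div_n mulrC divfK // expf_neq0.
have fw1 s : f1 s = 0 -> w s = 0 by move=> H; rewrite /w H !mul0r.
have fw2 s : f2 s = 0 -> w s = 0 by move=> H; rewrite /w H mulr0 !mul0r.
have fw3 s : f3 s = 0 -> w s = 0 by move=> H; rewrite /w H mulr0 mul0r.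
have fw4 s : f4 s = 0 -> w s = 0 by move=> H; rewrite /w H mulr0.
have k1 := key _ A1 f1 (fun s => erefl) fw1.
have k2 := key _ A2 f2 (fun s => erefl) fw2.
have k3 := key _ A3 f3 (fun s => erefl) fw3.
have k4 := key _ A4 f4 (fun s => erefl) fw4.
exists (scalem A1 c1), (scalem A2 c2), (scalem A3 c3), (scalem A4 c4); split.
- move=> i j k l; rewrite Hd; apply: eq_bigr => s _; rewrite !mxE.
  have [w0'|wn0] := eqVneq (w s) 0.
    move/eqP: w0'; rewrite /w !mulf_eq0 -!orbA => /or4P [] /eqP H;
      by rewrite (frob_col_eq0 H) !(mul0r, mulr0).
  have : c1 s * c2 s * c3 s * c4 s = 1.
    rewrite /c1 /c2 /c3 /c4.
    have -> : rho s / f1 s * (rho s / f2 s) * (rho s / f3 s) * (rho s / f4 s)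
      = rho s ^+ 4 / w s by rewrite /w; rewrite !invfM; ring.
    by rewrite rho4 mulfV.
  move=> H1; rewrite -[LHS]mulr1 -H1; ring.
- by move=> s; rewrite (proj1 (k1 s)) (proj1 (k2 s)) (proj1 (k3 s)) (proj1 (k4 s)).
- apply: eq_bigr => s _.
  by rewrite (proj2 (k1 s)) (proj2 (k2 s)) (proj2 (k3 s)) (proj2 (k4 s)) -!expr2
    -exprSr -exprSr rho4.
Qed.

End Bal.

Section Pad.
Variable R : realType.
Variables r r' : nat.
Hypothesis rr : (r <= r')%N.

Definition extn (F : 'I_r -> R) (n : nat) : R :=
  match (insub n : option 'I_r) with Some t => F t | None => 0 end.

Lemma sum_extn (F : 'I_r -> R) : \sum_(s < r') extn F s = \sum_(s < r) F s.
Proof.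
rewrite -(big_mkord xpredT (extn F)) (big_cat_nat (leq0n r) rr) /=.
rewrite [X in _ + X]big1_seq ?addr0; last first.
  move=> n /andP [_]; rewrite mem_index_iota => /andP [rn _].
  by rewrite /extn insubN // -leqNgt.
rewrite big_mkord; apply: eq_bigr => s _; by rewrite /extn valK.
Qed.

Definition padm n (A : 'M[R]_(n, r)) : 'M[R]_(n, r') :=
  \matrix_(i, s) extn (fun t => A i t) s.

Lemma sqc_pad n (A : 'M[R]_(n, r)) s : sqc (padm A) s = extn (sqc A) s.
Proof.
rewrite /sqc /extn; case E: (insub _) => [t|].
  by apply: eq_bigr => i _; rewrite mxE /extn E.
by apply: big1 => i _; rewrite mxE /extn E expr0n.
Qed.


Lemma pad_decomp N1 J N3 L (X : tensor4 R N1 J N3 L) (A1 : 'M[R]_(N1,r))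
  (A2 : 'M[R]_(J,r)) (A3 : 'M[R]_(N3,r)) (A4 : 'M[R]_(L,r)) :
  decomp X A1 A2 A3 A4 ->
  decomp X (padm A1) (padm A2) (padm A3) (padm A4) /\
  costD (padm A1) (padm A2) (padm A3) (padm A4) = costD A1 A2 A3 A4.
Proof.
move=> Hd; split.
  move=> i j k l; rewrite Hd -sum_extn; apply: eq_bigr => s _.
  by rewrite !mxE /extn; case: (insub _) => [t|]; rewrite ?mul0r.
rewrite /costD -sum_extn; apply: eq_bigr => s _.
rewrite !frob_col !sqc_pad /extn; case: (insub _) => [t|]; rewrite ?frob_col //.
by rewrite sqrtr0 !mul0r.
Qed.

End Pad.

Section Drop.
Variable R : realType.

Lemma frob_col' n r (A : 'M[R]_(n, r.+1)) s0 s :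
  frob (col s (col' s0 A)) = frob (col (lift s0 s) A).
Proof. by rewrite !frob_col /sqc; congr Num.sqrt; apply: eq_bigr => i _; rewrite mxE. Qed.

Lemma drop_col N1 J N3 L (X : tensor4 R N1 J N3 L) r (A1 : 'M[R]_(N1,r.+1))
  (A2 : 'M[R]_(J,r.+1)) (A3 : 'M[R]_(N3,r.+1)) (A4 : 'M[R]_(L,r.+1)) s0 :
  decomp X A1 A2 A3 A4 ->
  frob (col s0 A1) * frob (col s0 A2) * frob (col s0 A3) * frob (col s0 A4) = 0 ->
  decomp X (col' s0 A1) (col' s0 A2) (col' s0 A3) (col' s0 A4) /\
  costD (col' s0 A1) (col' s0 A2) (col' s0 A3) (col' s0 A4) = costD A1 A2 A3 A4.
Proof.
move=> Hd Hw; split.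
  move=> i j k l; rewrite Hd (bigD1_ord s0) //= .
  have -> : A1 i s0 * A2 j s0 * A3 k s0 * A4 l s0 = 0.
    move/eqP: Hw; rewrite !mulf_eq0 -!orbA => /or4P [] /eqP H;
      by rewrite (frob_col_eq0 H) !(mul0r, mulr0).
  by rewrite add0r; apply: eq_bigr => s _; rewrite !mxE.
rewrite [RHS](bigD1_ord s0) //= Hw add0r; apply: eq_bigr => s _.
by rewrite !frob_col'.
Qed.

End Drop.

Section Dep.
Variable R : realType.

Definition msz (N1 J N3 L : nat) := #|{: 'I_N1 * 'I_J * 'I_N3 * 'I_L}|.

Lemma dep N1 J N3 L r (A1 : 'M[R]_(N1,r))
  (A2 : 'M[R]_(J,r)) (A3 : 'M[R]_(N3,r)) (A4 : 'M[R]_(L,r)) :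
  (msz N1 J N3 L < r)%N ->
  exists mu : 'I_r -> R, (exists s, mu s != 0) /\
    forall i j k l, \sum_s mu s * (A1 i s * A2 j s * A3 k s * A4 l s) = 0.
Proof.
move=> Hr.
pose M : 'M[R]_(r, msz N1 J N3 L) := \matrix_(s, e)
  (let t := enum_val e in A1 t.1.1.1 s * A2 t.1.1.2 s * A3 t.1.2 s * A4 t.2 s).
have rk : \rank (kermx M) != 0%N.
  rewrite mxrank_ker subn_eq0 -ltnNge.
  exact: leq_ltn_trans (rank_leq_col M) Hr.
rewrite mxrank_eq0 in rk.
have [i0 [j0 Hij]] : exists i0 j0, kermx M i0 j0 != 0.
  case: (boolP [exists i, exists j, kermx M i j != 0]).
    by move=> /existsP [i /existsP [j H]]; exists i, j.
  move=> H; exfalso; move/negP: rk; apply; apply/eqP/matrixP => i j.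
  move: H; rewrite negb_exists => /forallP /(_ i).
  by rewrite negb_exists => /forallP /(_ j); rewrite negbK => /eqP ->; rewrite mxE.
exists (fun s => kermx M i0 s); split; first by exists j0.
move=> i j k l.
have /sub_kermxP H0 := row_sub i0 (kermx M).
move/matrixP: H0 => /(_ ord0 (enum_rank (i, j, k, l))).
rewrite !mxE => H; rewrite -[RHS]H; apply: eq_bigr => s _; by rewrite !mxE enum_rankK.
Qed.

Lemma pos_entry r (nu w : 'I_r -> R) :
  (forall s, 0 < w s) -> 0 <= \sum_s nu s * w s -> (exists s, nu s != 0) ->
  exists s, 0 < nu s.
Proof.
move=> wp hs [s1 hs1].
case: (boolP [exists s, 0 < nu s]) => [/existsP //|H]; exfalso.
have hn s : nu s <= 0.
  by move: H; rewrite negb_exists => /forallP /(_ s); rewrite -leNgt.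
have t0 s : 0 <= - (nu s * w s) by rewrite oppr_ge0 mulr_le0_ge0 // ltW // wp.
have S0 : \sum_s - (nu s * w s) = 0.
  apply/eqP; rewrite eq_le (sumr_ge0 _ (fun i _ => t0 i)) andbT.
  by rewrite sumrN oppr_le0.
have := @psumr_eq0P _ _ xpredT _ (fun i _ => t0 i) S0 s1 isT.
move/eqP; rewrite oppr_eq0 mulf_eq0 (negbTE hs1) /= => /eqP w0.
by have := wp s1; rewrite w0 ltxx.
Qed.

End Dep.

Section Red.
Variable R : realType.

Lemma reduce_step N1 J N3 L (X : tensor4 R N1 J N3 L) r (A1 : 'M[R]_(N1,r.+1))
  (A2 : 'M[R]_(J,r.+1)) (A3 : 'M[R]_(N3,r.+1)) (A4 : 'M[R]_(L,r.+1)) :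
  (msz N1 J N3 L < r.+1)%N -> decomp X A1 A2 A3 A4 ->
  exists (B1 : 'M[R]_(N1,r)) (B2 : 'M[R]_(J,r)) (B3 : 'M[R]_(N3,r)) (B4 : 'M[R]_(L,r)),
    decomp X B1 B2 B3 B4 /\ costD B1 B2 B3 B4 <= costD A1 A2 A3 A4.
Proof.
move=> Hr Hd.
pose w s := frob (col s A1) * frob (col s A2) * frob (col s A3) * frob (col s A4).
case: (boolP [exists s, w s == 0]).
  move=> /existsP [s0 /eqP H0].
  have [H1 H2] := drop_col Hd H0.
  by exists (col' s0 A1), (col' s0 A2), (col' s0 A3), (col' s0 A4); rewrite H2.
move=> Hnz.
have wp s : 0 < w s.
  move: Hnz; rewrite negb_exists => /forallP /(_ s) => H.
  by rewrite lt_def H /w !mulr_ge0 // frob_ge0.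
have [mu [[s1 Hs1] Hmu]] := dep A1 A2 A3 A4 Hr.
have [nu [[s2 Hs2] [Hnw Hnu]]] : exists nu : 'I_r.+1 -> R, (exists s, 0 < nu s) /\
   0 <= \sum_s nu s * w s /\
   forall i j k l, \sum_s nu s * (A1 i s * A2 j s * A3 k s * A4 l s) = 0.
  case: (lerP 0 (\sum_s mu s * w s)) => h.
    exists mu; split => //; apply: pos_entry h _ => //; by exists s1.
  exists (fun s => - mu s); split; last split.
  - apply: (@pos_entry _ _ _ w) => //; last by exists s1; rewrite oppr_eq0.
    by under eq_bigr do rewrite mulNr; rewrite sumrN oppr_ge0 ltW.
  - by under eq_bigr do rewrite mulNr; rewrite sumrN oppr_ge0 ltW.
  - by move=> i j k l; under eq_bigr do rewrite mulNr; rewrite sumrN Hmu oppr0.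
case: (@arg_maxP _ _ _ s2 xpredT nu isT) => s0 _ Hmax.
have nu0 : 0 < nu s0 by apply: lt_le_trans Hs2 (Hmax s2 isT).
pose la s := 1 - nu s / nu s0.
have la_ge0 s : 0 <= la s by rewrite subr_ge0 ler_pdivrMr // mul1r; exact: Hmax.
have la0 : la s0 = 0 by rewrite /la mulfV ?gt_eqF // subrr.
have Hd' : decomp X (scalem A1 la) A2 A3 A4.
  move=> i j k l; rewrite Hd.
  have -> : \sum_s scalem A1 la i s * A2 j s * A3 k s * A4 l s
     = \sum_s A1 i s * A2 j s * A3 k s * A4 l s
       - (nu s0)^-1 * \sum_s nu s * (A1 i s * A2 j s * A3 k s * A4 l s).
    rewrite mulr_sumr -sumrB; apply: eq_bigr => s _; rewrite mxE /la; ring.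
  by rewrite Hnu mulr0 subr0.
have Hw0 : frob (col s0 (scalem A1 la)) * frob (col s0 A2) * frob (col s0 A3)
   * frob (col s0 A4) = 0 by rewrite scale_frob la0 normr0 mulr0 !mul0r.
have [H1 H2] := drop_col Hd' Hw0.
exists (col' s0 (scalem A1 la)), (col' s0 A2), (col' s0 A3), (col' s0 A4); split => //.
rewrite H2.
have -> : costD (scalem A1 la) A2 A3 A4 = \sum_s w s - (nu s0)^-1 * \sum_s nu s * w s.
  rewrite mulr_sumr -sumrB; apply: eq_bigr => s _.
  rewrite scale_frob ger0_norm // /w /la; ring.
rewrite gerDl oppr_le0; apply: mulr_ge0 => //; by rewrite invr_ge0 ltW.
Qed.


Lemma reduce N1 J N3 L (X : tensor4 R N1 J N3 L) n : forall r, (r <= n)%N ->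
  forall (A1 : 'M[R]_(N1,r)) (A2 : 'M[R]_(J,r)) (A3 : 'M[R]_(N3,r)) (A4 : 'M[R]_(L,r)),
  decomp X A1 A2 A3 A4 ->
  exists (B1 : 'M[R]_(N1,msz N1 J N3 L)) (B2 : 'M[R]_(J,msz N1 J N3 L))
         (B3 : 'M[R]_(N3,msz N1 J N3 L)) (B4 : 'M[R]_(L,msz N1 J N3 L)),
    decomp X B1 B2 B3 B4 /\ costD B1 B2 B3 B4 <= costD A1 A2 A3 A4.
Proof.
elim: n => [|n IH] r rn A1 A2 A3 A4 Hd.
  have rr : (r <= msz N1 J N3 L)%N by rewrite (leq_trans rn).
  have [H1 H2] := pad_decomp rr Hd.
  by exists (padm _ A1), (padm _ A2), (padm _ A3), (padm _ A4); rewrite H2.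
case: (leqP r (msz N1 J N3 L)) => [rr|rr].
  have [H1 H2] := pad_decomp rr Hd.
  by exists (padm _ A1), (padm _ A2), (padm _ A3), (padm _ A4); rewrite H2.
move: rn A1 A2 A3 A4 Hd rr; case: r => [//|r] rn A1 A2 A3 A4 Hd rr.
have [B1 [B2 [B3 [B4 [HB HBc]]]]] := reduce_step rr Hd.
have [C1 [C2 [C3 [C4 [HC HCc]]]]] := IH r rn B1 B2 B3 B4 HB.
exists C1, C2, C3, C4; split => //; exact: le_trans HCc HBc.
Qed.

End Red.

Section Basis.
Variable R : realType.

Lemma basis_decomp N1 J N3 L (X : tensor4 R N1 J N3 L) :
  exists (A1 : 'M[R]_(N1,msz N1 J N3 L)) (A2 : 'M[R]_(J,msz N1 J N3 L))
         (A3 : 'M[R]_(N3,msz N1 J N3 L)) (A4 : 'M[R]_(L,msz N1 J N3 L)),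
    decomp X A1 A2 A3 A4.
Proof.
exists (\matrix_(i, s) (let t := enum_val s in (i == t.1.1.1)%:R * X t.1.1.1 t.1.1.2 t.1.2 t.2)).
exists (\matrix_(j, s) (let t := enum_val s in (j == t.1.1.2)%:R)).
exists (\matrix_(k, s) (let t := enum_val s in (k == t.1.2)%:R)).
exists (\matrix_(l, s) (let t := enum_val s in (l == t.2)%:R)).
move=> i j k l.
rewrite (bigD1 (enum_rank (i, j, k, l))) //= big1 ?addr0.
  by rewrite !mxE /= enum_rankK /= !eqxx !mulr1 mul1r.
move=> s Hs; rewrite !mxE /=.
case E: (enum_val s) => [[[a b] c] d] /=.
have Hne : (a, b, c, d) != (i, j, k, l).
  apply/eqP => E2; move/eqP: Hs; apply; by rewrite -E2 -E enum_valK.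
case: eqP => [e1|n1]; last by rewrite !mul0r.
case: eqP => [e2|n2]; last by rewrite mulr0 !mul0r.
case: eqP => [e3|n3]; last by rewrite mulr0 mul0r.
case: eqP => [e4|n4]; last by rewrite mulr0.
by move: Hne; rewrite -e1 -e2 -e3 -e4 eqxx.
Qed.

Lemma nuc_nonempty N1 J N3 L (X : tensor4 R N1 J N3 L) : nonempty (nuc_costs X).
Proof.
have [A1 [A2 [A3 [A4 Hd]]]] := basis_decomp X.
by exists (costD A1 A2 A3 A4), (msz N1 J N3 L), A1, A2, A3, A4.
Qed.

End Basis.

Section Cont.
Variable R : realType.
Variable P : nat.
Local Notation V := 'rV[R]_P.

Lemma cD (f g : V -> R) : continuous f -> continuous g -> continuous (fun x => f x + g x).
Proof. move=> cf cg x; exact: (continuousD (cf x) (cg x)). Qed.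

Lemma cM (f g : V -> R) : continuous f -> continuous g -> continuous (fun x => f x * g x).
Proof. move=> cf cg x; exact: (continuousM (cf x) (cg x)). Qed.

Lemma cN (f : V -> R) : continuous f -> continuous (fun x => - f x).
Proof. move=> cf x; exact: (continuousN (cf x)). Qed.

Lemma cB (f g : V -> R) : continuous f -> continuous g -> continuous (fun x => f x - g x).
Proof. by move=> cf cg; apply: cD => //; apply: cN. Qed.

Lemma cX2 (f : V -> R) : continuous f -> continuous (fun x => f x ^+ 2).
Proof. by move=> cf; apply: cM. Qed.

Lemma cC (c : R) : continuous (fun _ : V => c).
Proof. exact: cst_continuous. Qed.

Lemma cS (I : Type) (rs : seq I) (F : I -> V -> R) :
  (forall i, continuous (F i)) -> continuous (fun x => \sum_(i <- rs) F i x).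
Proof.
move=> cF; elim: rs => [|a rs IH].
  by rewrite (_ : (fun x => _) = (fun _ => 0)); [exact: cC|apply/funext => x; rewrite big_nil].
rewrite (_ : (fun x => _) = (fun x => F a x + \sum_(i <- rs) F i x)).
  exact: cD.
by apply/funext => x; rewrite big_cons.
Qed.

Lemma cCoord p : continuous (fun W : V => W ord0 p).
Proof. exact: coord_continuous. Qed.

End Cont.

Section Compact.
Variable R : realType.
Variables N1 J N3 L : nat.
Variable X : tensor4 R N1 J N3 L.
Local Notation m := (msz N1 J N3 L).
Local Notation T5 := (((('I_N1 + 'I_J) + ('I_N3 + 'I_L)) * 'I_m)%type).
Local Notation T4 := (('I_N1 * 'I_J * 'I_N3 * 'I_L)%type).
Local Notation P := #|{: T5}|.
Local Notation V := 'rV[R]_P.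

Definition getW (W : V) (x : T5) : R := W ord0 (enum_rank x).
Definition M1 (W : V) : 'M[R]_(N1, m) := \matrix_(i, s) getW W (inl (inl i), s).
Definition M2 (W : V) : 'M[R]_(J, m) := \matrix_(i, s) getW W (inl (inr i), s).
Definition M3 (W : V) : 'M[R]_(N3, m) := \matrix_(i, s) getW W (inr (inl i), s).
Definition M4 (W : V) : 'M[R]_(L, m) := \matrix_(i, s) getW W (inr (inr i), s).

Definition Gf (W : V) : R :=
  \sum_(t : T4) (X t.1.1.1 t.1.1.2 t.1.2 t.2
     - \sum_s M1 W t.1.1.1 s * M2 W t.1.1.2 s * M3 W t.1.2 s * M4 W t.2 s) ^+ 2
  + \sum_s ((sqc (M2 W) s - sqc (M1 W) s) ^+ 2 + (sqc (M3 W) s - sqc (M1 W) s) ^+ 2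
            + (sqc (M4 W) s - sqc (M1 W) s) ^+ 2).

Definition costP (W : V) : R := \sum_s sqc (M1 W) s ^+ 2.

Lemma cget x : continuous (fun W : V => getW W x).
Proof. exact: cCoord. Qed.

Lemma cM1 i s : continuous (fun W => M1 W i s).
Proof.
by rewrite (_ : (fun W => _) = (fun W => getW W (inl (inl i), s)));
  [exact: cget | apply/funext => W; rewrite mxE].
Qed.
Lemma cM2 i s : continuous (fun W => M2 W i s).
Proof.
by rewrite (_ : (fun W => _) = (fun W => getW W (inl (inr i), s)));
  [exact: cget | apply/funext => W; rewrite mxE].
Qed.
Lemma cM3 i s : continuous (fun W => M3 W i s).
Proof.
by rewrite (_ : (fun W => _) = (fun W => getW W (inr (inl i), s)));
  [exact: cget | apply/funext => W; rewrite mxE].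
Qed.
Lemma cM4 i s : continuous (fun W => M4 W i s).
Proof.
by rewrite (_ : (fun W => _) = (fun W => getW W (inr (inr i), s)));
  [exact: cget | apply/funext => W; rewrite mxE].
Qed.

Lemma csqc n (F : V -> 'M[R]_(n, m)) s :
  (forall i, continuous (fun W => F W i s)) -> continuous (fun W => sqc (F W) s).
Proof. move=> cF; apply: cS => i; exact: cX2. Qed.

Lemma cGf : continuous Gf.
Proof.
apply: cD.
  apply: cS => t /=; apply: cX2; apply: cB; first exact: cC.
  apply: cS => s /=.
  apply: (cM (f := fun x0 => M1 x0 t.1.1.1 s * M2 x0 t.1.1.2 s * M3 x0 t.1.2 s) (g := fun x0 => M4 x0 t.2 s)); last exact: cM4.
  apply: (cM (f := fun x0 => M1 x0 t.1.1.1 s * M2 x0 t.1.1.2 s) (g := fun x0 => M3 x0 t.1.2 s)); last exact: cM3.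
  apply: (cM (f := fun x0 => M1 x0 t.1.1.1 s) (g := fun x0 => M2 x0 t.1.1.2 s)); [exact: cM1|exact: cM2].
apply: cS => s /=.
have c1 := csqc (F := M1) (fun i => @cM1 i s).
have c2 := csqc (F := M2) (fun i => @cM2 i s).
have c3 := csqc (F := M3) (fun i => @cM3 i s).
have c4 := csqc (F := M4) (fun i => @cM4 i s).
apply: cD; [apply: cD|]; apply: cX2; apply: cB => //.
Qed.

Lemma ccostP : continuous costP.
Proof. apply: cS => s; apply: cX2; apply: csqc => i; exact: cM1. Qed.

End Compact.

Section Aux.
Variable R : realType.

Lemma entry_le_sqc n r (A : 'M[R]_(n,r)) i s : A i s ^+ 2 <= sqc A s.
Proof.
rewrite /sqc (bigD1 i) //= lerDl; apply: sumr_ge0 => j _; exact: sqr_ge0.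
Qed.

Lemma sqc_le_cost N1 J N3 L r (A1 : 'M[R]_(N1,r))
  (A2 : 'M[R]_(J,r)) (A3 : 'M[R]_(N3,r)) (A4 : 'M[R]_(L,r)) s :
  balanced A1 A2 A3 A4 -> sqc A1 s ^+ 2 <= costD A1 A2 A3 A4.
Proof.
move=> Hb; rewrite (costD_bal Hb) (bigD1 s) //= lerDl.
apply: sumr_ge0 => j _; exact: sqr_ge0.
Qed.

Lemma num_bound (x n c : R) : x ^+ 2 <= n -> n ^+ 2 <= c -> `|x| <= 1 + c.
Proof.
move=> h1 h2; set y := `|x|.
have y0 : 0 <= y by exact: normr_ge0.
have yy : y ^+ 2 = x ^+ 2 by rewrite /y real_normK ?num_real.
have c0 : 0 <= c by apply: le_trans h2; exact: sqr_ge0.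
case: (lerP y 1) => hy; first by lra.
have n1 : 1 <= n by nra.
nra.
Qed.

End Aux.

Section Attain.
Local Open Scope classical_set_scope.
Variable R : realType.
Variables N1 J N3 L : nat.
Variable X : tensor4 R N1 J N3 L.
Local Notation m := (msz N1 J N3 L).
Local Notation T5 := (((('I_N1 + 'I_J) + ('I_N3 + 'I_L)) * 'I_m)%type).
Local Notation P := #|{: T5}|.
Local Notation V := 'rV[R]_P.

Definition toW (A1 : 'M[R]_(N1,m)) (A2 : 'M[R]_(J,m)) (A3 : 'M[R]_(N3,m))
  (A4 : 'M[R]_(L,m)) : V :=
  \row_p (match enum_val p with
          | (inl (inl i), s) => A1 i s
          | (inl (inr j), s) => A2 j s
          | (inr (inl k), s) => A3 k s
          | (inr (inr l), s) => A4 l s end).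

Lemma toW_M A1 A2 A3 A4 :
  [/\ M1 (toW A1 A2 A3 A4) = A1, M2 (toW A1 A2 A3 A4) = A2,
      M3 (toW A1 A2 A3 A4) = A3 & M4 (toW A1 A2 A3 A4) = A4].
Proof.
by split; apply/matrixP => i s; rewrite !mxE /getW /toW mxE enum_rankK.
Qed.

Lemma Gf0 W : Gf X W = 0 ->
  decomp X (M1 W) (M2 W) (M3 W) (M4 W) /\ balanced (M1 W) (M2 W) (M3 W) (M4 W).
Proof.
move=> /eqP; rewrite paddr_eq0; first last.
- by apply: sumr_ge0 => s _; rewrite !addr_ge0 // sqr_ge0.
- by apply: sumr_ge0 => t _; rewrite sqr_ge0.
move=> /andP [/eqP H1 /eqP H2]; split.
  move=> i j k l.
  have := @psumr_eq0P _ _ xpredT _ (fun t _ => sqr_ge0 _) H1 (i, j, k, l) isT.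
  by move/eqP; rewrite sqrf_eq0 subr_eq0 => /eqP.
move=> s.
have := @psumr_eq0P _ _ xpredT (fun s => (sqc (M2 W) s - sqc (M1 W) s) ^+ 2
   + (sqc (M3 W) s - sqc (M1 W) s) ^+ 2 + (sqc (M4 W) s - sqc (M1 W) s) ^+ 2)
   (fun s _ => ltac:(by rewrite !addr_ge0 // sqr_ge0)) H2 s isT.
move/eqP; rewrite paddr_eq0 ?addr_ge0 ?sqr_ge0 // paddr_eq0 ?sqr_ge0 //.
by rewrite !sqrf_eq0 !subr_eq0 => /andP [/andP [/eqP -> /eqP ->] /eqP ->].
Qed.

Lemma Gf0' W : decomp X (M1 W) (M2 W) (M3 W) (M4 W) ->
  balanced (M1 W) (M2 W) (M3 W) (M4 W) -> Gf X W = 0.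
Proof.
move=> Hd Hb; rewrite /Gf big1 ?add0r.
  by apply: big1 => s _; have [-> [-> ->]] := Hb s; rewrite subrr expr0n !addr0.
by move=> [[[i j] k] l] _ /=; rewrite -Hd subrr expr0n.
Qed.


Lemma red_bal r (A1 : 'M[R]_(N1,r)) (A2 : 'M[R]_(J,r)) (A3 : 'M[R]_(N3,r)) (A4 : 'M[R]_(L,r)) :
  decomp X A1 A2 A3 A4 ->
  exists (B1 : 'M[R]_(N1,m)) (B2 : 'M[R]_(J,m)) (B3 : 'M[R]_(N3,m)) (B4 : 'M[R]_(L,m)),
    [/\ decomp X B1 B2 B3 B4, balanced B1 B2 B3 B4 & costD B1 B2 B3 B4 <= costD A1 A2 A3 A4].
Proof.
move=> Hd.
have [C1 [C2 [C3 [C4 [HC HCc]]]]] := reduce (leqnn r) Hd.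
have [B1 [B2 [B3 [B4 [HB HBb HBc]]]]] := balance HC.
by exists B1, B2, B3, B4; split => //; rewrite HBc.
Qed.

Lemma costP_toW B1 B2 B3 B4 : balanced B1 B2 B3 B4 ->
  costP (toW B1 B2 B3 B4) = costD B1 B2 B3 B4.
Proof.
move=> Hb; rewrite /costP; have [-> _ _ _] := toW_M B1 B2 B3 B4; by rewrite (costD_bal Hb).
Qed.

Lemma attain : exists (A1 : 'M[R]_(N1,m)) (A2 : 'M[R]_(J,m)) (A3 : 'M[R]_(N3,m)) (A4 : 'M[R]_(L,m)),
  [/\ decomp X A1 A2 A3 A4, balanced A1 A2 A3 A4 & costD A1 A2 A3 A4 = nuc_norm X].
Proof.
have [Ab1 [Ab2 [Ab3 [Ab4 Hbd]]]] := basis_decomp X.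
set c0 := costD Ab1 Ab2 Ab3 Ab4.
have c0_ge0 : 0 <= c0 by exact: costD_ge0.
pose Bd := 1 + c0.
pose K := ([set W : V | forall p, `[- Bd, Bd]%classic (W ord0 p)] `&` (Gf X @^-1` [set x | x = 0]))%classic.
have inK : forall B1 B2 B3 B4, decomp X B1 B2 B3 B4 -> balanced B1 B2 B3 B4 ->
    costD B1 B2 B3 B4 <= c0 -> K (toW B1 B2 B3 B4).
  move=> B1 B2 B3 B4 Hd Hb Hc; split; last first.
    by rewrite /= Gf0' //; have [-> -> -> ->] := toW_M B1 B2 B3 B4.
  move=> p /=; rewrite mxE.
  have bnd n (A : 'M[R]_(n, m)) i s : sqc A s = sqc B1 s -> `|A i s| <= Bd.
    move=> HA; apply: (@num_bound _ _ (sqc B1 s)); first by rewrite -HA entry_le_sqc.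
    exact: le_trans (sqc_le_cost s Hb) Hc.
  suff : `|match enum_val p with
          | (inl (inl i), s) => B1 i s
          | (inl (inr j), s) => B2 j s
          | (inr (inl k), s) => B3 k s
          | (inr (inr l), s) => B4 l s end| <= Bd.
    by rewrite ler_norml => /andP [h1 h2]; rewrite in_itv /= h1 h2.
  case: (enum_val p) => [[[i|j]|[k|l]] s].
  - exact: bnd.
  - by apply: bnd; have [] := Hb s.
  - by apply: bnd; have [_ []] := Hb s.
  - by apply: bnd; have [_ [_]] := Hb s.
have [Wb1 [Wb2 [Wb3 [Wb4 [HWd HWb HWc]]]]] := red_bal Hbd.
have K0 : K !=set0 by exists (toW Wb1 Wb2 Wb3 Wb4); exact: inK.
have cK : compact K.
  apply: compact_closedI.
    by apply: (@rV_compact _ _ (fun=> `[- Bd, Bd]%classic)) => _; exact: segment_compact.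
  apply: preimage_closed; first by move=> W _; exact: cGf.
  exact: closed_eq.
have cc : {within K, continuous (@costP R N1 J N3 L)}.
  by apply: continuous_subspaceT; exact: ccostP.
have [W0 W0K Hmin] := EVT_min_rV K0 cK cc.
have [_ HG] := set_mem W0K.
have [Hd0 Hb0] := Gf0 HG.
exists (M1 W0), (M2 W0), (M3 W0), (M4 W0); split => //.
have HcP : costD (M1 W0) (M2 W0) (M3 W0) (M4 W0) = costP W0 by rewrite (costD_bal Hb0).
rewrite HcP; apply/eqP; rewrite eq_le; apply/andP; split; last first.
  by rewrite -HcP; apply: nuc_le; exists m, (M1 W0), (M2 W0), (M3 W0), (M4 W0).
apply: lb_le_inf; first exact: nuc_nonempty.
move=> c [r [A1 [A2 [A3 [A4 [Hd ->]]]]]].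
have [B1 [B2 [B3 [B4 [HBd HBb HBc]]]]] := red_bal Hd.
case: (lerP (costD B1 B2 B3 B4) c0) => hc.
  apply: (le_trans _ HBc); rewrite -costP_toW //; apply: Hmin; apply: mem_set; exact: inK.
apply: (le_trans _ HBc); apply: (le_trans _ (ltW hc)).
apply: (le_trans _ HWc); rewrite -costP_toW //; apply: Hmin; apply: mem_set; exact: inK.
Qed.

End Attain.

Lemma part1 (R : realType) (N1 J N3 L : nat) (X : tensor4 R N1 J N3 L) :
  (exists (D : nat) (U : 'M[R]_(N1, D)) (V : 'M[R]_(N3, D))
          (Rt : 'M[R]_(J, D)) (Tt : 'M[R]_(L, D)),
      is_fact X U V Rt Tt /\ fact_obj U V Rt Tt = nuc_norm X).
Proof.
have [JL0|JL0] := eqVneq (J * L)%N 0%N.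
  exists 0%N, 0, 0, 0, 0; split.
    move=> j l; exfalso; move/eqP: JL0; rewrite muln_eq0 => /orP [] /eqP E.
      by have := ltn_ord j; move: (nat_of_ord j) => jj; rewrite E ltn0.
    by have := ltn_ord l; move: (nat_of_ord l) => ll; rewrite E ltn0.
  rewrite obj_decomp S_0 // mulr0 invr0 !mul0r.
  apply/eqP; rewrite eq_le; apply/andP; split.
    apply: lb_le_inf; first exact: nuc_nonempty.
    by move=> c [r [A1 [A2 [A3 [A4 [_ ->]]]]]]; exact: costD_ge0.
  have [A1 [A2 [A3 [A4 Hd]]]] := basis_decomp X.
  rewrite -(costD_JL0 A1 A3 A2 A4 JL0); apply: nuc_le.
  by exists (msz N1 J N3 L), A1, A2, A3, A4.
have [A1 [A2 [A3 [A4 [Hd Hb Hc]]]]] := attain X.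
have [U [V [Rt [Tt [Hf Ho]]]]] := construct JL0 Hd Hb.
by exists (msz N1 J N3 L), U, V, Rt, Tt; rewrite Ho Hc.
Qed.

Unset Implicit Arguments.
Theorem theorem2 (R : realType) (N1 J N3 L : nat) (X : tensor4 R N1 J N3 L) :
  (* the minimum is attained and equals the nuclear norm *)
  (exists (D : nat) (U : 'M[R]_(N1, D)) (V : 'M[R]_(N3, D))
          (Rt : 'M[R]_(J, D)) (Tt : 'M[R]_(L, D)),
      is_fact X U V Rt Tt /\ fact_obj U V Rt Tt = nuc_norm X) /\
  (forall (D : nat) (U : 'M[R]_(N1, D)) (V : 'M[R]_(N3, D))
          (Rt : 'M[R]_(J, D)) (Tt : 'M[R]_(L, D)),
      is_fact X U V Rt Tt -> nuc_norm X <= fact_obj U V Rt Tt) /\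
  (* every minimizer is balanced column-wise *)
  (forall (D : nat) (U : 'M[R]_(N1, D)) (V : 'M[R]_(N3, D))
          (Rt : 'M[R]_(J, D)) (Tt : 'M[R]_(L, D)),
      is_fact X U V Rt Tt -> fact_obj U V Rt Tt = nuc_norm X ->
      forall d : 'I_D,
        frob (col d U) * frob (col d Rt) * frob (col d Tt)
          = Num.sqrt ((J * L)%:R) * frob (col d V) /\
        frob (col d V) * frob (col d Rt) * frob (col d Tt)
          = Num.sqrt ((J * L)%:R) * frob (col d U)).
Proof.
split; first exact: part1.
split; first by move=> D U V Rt Tt; exact: part2.
by move=> D U V Rt Tt; exact: part3.
Qed.
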